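(* Let $f_0$ be a probability density on $[0,1]$ with $0<\rho_0\le f_0\le D_0<\infty$, and let $X_1,\dots,X_n$ be i.i.d. with density $f_0$. Let $(a_n)$ be real numbers with $na_n^2\ge1$ for all $n\ge1$, and let $(\Pi_n)$ be priors on probability densities on $[0,1]$ that are bounded and bounded away from $0$, each $\Pi_n$ supported in $\{f: h(f,f_0)\le a_n\}$. Let $(\gamma_n)\subset L^\infty[0,1]$, $\tilde\gamma_n=\gamma_n-\int_0^1\gamma_nf_0$, and suppose for some $m>0$ and all $n\ge1$, $$\|\tilde\gamma_n\|_L\le m,\qquad\|\tilde\gamma_n\|_\infty\le\big(4a_n\log(n+1)\big)^{-1}.$$ Then there exists $C>0$ depending only on $m$ and $\|f_0\|_\infty$ such that for every $n\ge1$ and every real $t$ with $|t|\le\log n$, $$E^{\Pi_n}\big[e^{t\sqrt n\langle f-f_0,\gamma_n\rangle_2}\mid X^{(n)}\big]\le e^{Ct^2+tW_n(\gamma_n)}\,\frac{\int e^{\ell_n(f_t)-\ell_n(f_0)}\,d\Pi_n(f)}{\int e^{\ell_n(f)-\ell_n(f_0)}\,d\Pi_n(f)},$$ where $f_t=f\,e^{-t\tilde\gamma_n/\sqrt n}\big/\int_0^1f\,e^{-t\tilde\gamma_n/\sqrt n}$.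
   Context: $\ell_n(f)=\sum_{i=1}^n\log f(X_i)$. For $u\in L^2(f_0)$, $\|u\|_L^2=\int_0^1(u-\int uf_0)^2f_0$ and $W_n(u)=n^{-1/2}\sum_{i=1}^n\big(u(X_i)-\int_0^1uf_0\big)$. $h$ is the Hellinger distance, $h(f,g)^2=\int_0^1(\sqrt f-\sqrt g)^2$. $E^{\Pi_n}[\cdot\mid X^{(n)}]$ is expectation under the posterior $d\Pi_n(f\mid X^{(n)})\propto e^{\ell_n(f)}d\Pi_n(f)$. *)

(* Defs.v *)
From HB Require Import structures.
From mathcomp Require Import all_boot all_order all_algebra.
From mathcomp Require Import all_classical all_reals all_analysis.
Set Implicit Arguments. Unset Strict Implicit. Unset Printing Implicit Defensive.
Import Order.TTheory GRing.Theory Num.Theory.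
Import numFieldNormedType.Exports.
Local Open Scope classical_set_scope.
Local Open Scope ring_scope.

Section defs.
Context {R : realType}.

Definition leb01 := (@lebesgue_measure R).
Definition I01 : set R := `[0%R, 1%R]%classic.

Definition int01 (g : R -> R) : R := Rintegral leb01 I01 g.

Definition ip01 (f g : R -> R) : R := int01 (fun x => f x * g x).

Definition mean0 (f0 u : R -> R) : R := int01 (fun y => u y * f0 y).

Definition centered (f0 u : R -> R) : R -> R := fun x => u x - mean0 f0 u.

Definition Lnorm_f0 (f0 u : R -> R) : R :=
  Num.sqrt (int01 (fun x => (u x - mean0 f0 u) ^+ 2 * f0 x)).

Definition linf01 (g : R -> R) : \bar R :=
  ereal_inf [set M : \bar R | {ae leb01, forall x, I01 x -> (`|g x|%:E <= M)%E}].

Definition hell01 (f g : R -> R) : R :=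
  Num.sqrt (int01 (fun x => (Num.sqrt (f x) - Num.sqrt (g x)) ^+ 2)).

Definition is_density01 (f : R -> R) : Prop :=
  measurable_fun I01 f /\ (forall x, I01 x -> 0 <= f x) /\ int01 f = 1.

Definition bdd_away0 (f : R -> R) : Prop :=
  exists lo hi : R, 0 < lo /\ forall x, I01 x -> lo <= f x <= hi.

Definition loglik (n : nat) (X : nat -> R) (f : R -> R) : R :=
  \sum_(i < n) ln (f (X i)).

Definition Wn (f0 : R -> R) (n : nat) (X : nat -> R) (u : R -> R) : R :=
  (Num.sqrt n%:R)^-1 * \sum_(i < n) (u (X i) - mean0 f0 u).

Definition tilt (gt : R -> R) (n : nat) (t : R) (f : R -> R) : R -> R :=
  fun x => f x * expR (- (t * gt x) / Num.sqrt n%:R) /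
           int01 (fun y => f y * expR (- (t * gt y) / Num.sqrt n%:R)).

(* posterior expectation E^{Pi}[G(f) | X^(n)] for a prior Pi on a parameter
   space T, theta |-> dens theta being the density indexed by theta:
   \int G e^{l_n} dPi / \int e^{l_n} dPi   (extended-real division) *)
Definition post_exp {d} {T : measurableType d} (Pi : probability T R)
  (n : nat) (X : nat -> R) (dens : T -> R -> R) (G : T -> R) : \bar R :=
  ((\int[Pi]_th (G th * expR (loglik n X (dens th)))%:E) /
   (\int[Pi]_th (expR (loglik n X (dens th)))%:E))%E.

End defs.

(* Main.v *)
Require Import Defs.
From HB Require Import structures.
From mathcomp Require Import all_boot all_order all_algebra.
From mathcomp Require Import all_classical all_reals all_analysis.
From mathcomp Require Import measurable_realfun.
From mathcomp Require Import ring lra.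
Import Order.TTheory GRing.Theory Num.Theory.
Import numFieldNormedType.Exports.
Local Open Scope classical_set_scope.
Local Open Scope ring_scope.

Section key.
Context d (T : measurableType d) (R : realType) (mu : {measure set T -> \bar R}).
Local Open Scope ereal_scope.
Import HBNNSimple.

Lemma key_le (f g : T -> \bar R) (k : R) : (0 < k)%R ->
  (forall x, 0 <= f x) -> (forall x, 0 <= g x) ->
  {ae mu, forall x, f x <= k%:E * g x} ->
  \int[mu]_x f x <= k%:E * \int[mu]_x g x.
Proof.
move=> k0 f0 g0 [N [mN muN sub]].
rewrite (ge0_integralTE _ f0) (ge0_integralTE _ g0).
apply: ub_ereal_sup => _ [h /= hf <-].
have k1 : (0 <= k^-1)%R by rewrite invr_ge0 ltW.
pose h' := scale_nnsfun (proj_nnsfun h (measurableC mN)) k1.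
have h'E x : h' x = (k^-1 * (h x * \1_(~` N) x))%R by [].
have h'g : forall x, ((h' x)%:E <= g x).
  move=> x; rewrite h'E.
  have [Nx|Nx] := pselect (N x).
    by rewrite indicE memNset //= mulr0 mulr0 g0.
  rewrite indicE mem_set // mulr1.
  have : f x <= k%:E * g x.
    by apply: contrapT => H; apply: Nx; apply: sub => /= H'; apply: H; exact: H'.
  move=> fg.
  rewrite EFinM; apply: (@le_trans _ _ ((k^-1)%:E * (k%:E * g x))).
    by apply: lee_wpmul2l; [rewrite lee_fin|exact: le_trans (hf x) fg].
  by rewrite muleA -EFinM mulVf ?gt_eqF // mul1e.
have := ereal_sup_ubound (S := [set sintegral mu h0 | h0 in [set h0 : {nnsfun T >-> R} | forall x, ((h0 x)%:E <= g x)]]) (ex_intro2 _ _ h' h'g erefl).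
move=> H.
have -> : sintegral mu h = k%:E * sintegral mu h'.
  have -> : sintegral mu h' = (k^-1)%:E * sintegral mu (proj_nnsfun h (measurableC mN)).
    by rewrite -sintegralrM.
  rewrite muleA -EFinM divff ?gt_eqF // mul1e.
  have iE (u : {nnsfun T >-> R}) : sintegral mu u = \int[mu]_x (u x)%:E.
    by rewrite integral_nnsfun // patch_setT.
  rewrite !iE (ge0_negligible_integral _ _ _ _ muN) //; last first.
    by move=> x _; rewrite lee_fin.
    by apply/measurable_EFinP.
  rewrite [RHS](ge0_negligible_integral _ _ _ _ muN) //; last first.
    by move=> x _; rewrite lee_fin.
    by apply/measurable_EFinP.
  apply: eq_integral => x; rewrite inE => -[_ Nx].
  have -> : proj_nnsfun h (measurableC mN) x = (h x * \1_(~` N) x)%R by [].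
  by rewrite indicE (@mem_set _ (~` N) x Nx) mulr1.
by rewrite lee_pmul2l ?lte_fin.
Qed.
End key.

Section ratio.
Local Open Scope ereal_scope.
Lemma ratio_le (R : realType) (X Y Nn B : \bar R) (K c : R) : (0 < K)%R -> (0 < c)%R ->
  0 <= X -> 0 <= Y -> 0 <= Nn -> 0 <= B ->
  X <= (K / c)%:E * Nn -> B <= c%:E * Y -> X * Y^-1 <= K%:E * (Nn * B^-1).
Proof.
move=> K0 c0 X0 Y0 N0 B0 XN BY.
have Yi : 0 <= Y^-1 by rewrite inve_ge0.
apply: (le_trans (lee_wpmul2r Yi XN)).
have cY0 : 0 <= c%:E * Y by rewrite mule_ge0 // lee_fin ltW.
have e : (c%:E * Y)^-1 = (c^-1)%:E * Y^-1.
  rewrite inveM; last first.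
    case: Y Y0 {XN BY Yi cY0} => [s||] //= s0.
    by rewrite (gt_eqF c0) (ltW c0) implybT.
  congr (_ * _); rewrite /inve /= (gt_eqF c0) //.
have le1 : (c%:E * Y)^-1 <= B^-1.
  by rewrite lee_pV2 // inE.
have -> : (K / c)%:E * Nn * Y^-1 = K%:E * (Nn * (c%:E * Y)^-1).
  by rewrite e EFinM -!muleA; congr (_ * _); rewrite muleCA.
apply: lee_wpmul2l; first by rewrite lee_fin ltW.
by apply: lee_wpmul2l.
Qed.

End ratio.

Section H.
Context {R : realType}.

Lemma mI01 : measurable (@I01 R).
Proof. exact: measurable_itv. Qed.

Lemma muI01 : leb01 (@I01 R) = 1%E.
Proof. by rewrite /leb01 /I01 lebesgue_measure_itv /= lte01 /= oppr0 adde0. Qed.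

Lemma bnd_of (D : set R) (F : R -> R) (B : R) :
  (forall x, D x -> `|F x| <= B) -> [bounded F x | x in D].
Proof.
move=> H; exists B; split; first by rewrite num_real.
move=> M BM x Dx /=; exact: le_trans (H _ Dx) (ltW BM).
Qed.

Definition bndD (D : set R) (F : R -> R) := exists B, forall x, D x -> `|F x| <= B.

Lemma int_D {N : set R} {F : R -> R} : measurable N -> leb01 N = 0%E ->
  measurable_fun I01 F -> bndD (I01 `\` N) F ->
  leb01.-integrable (I01 `\` N) (EFin \o F).
Proof.
move=> mN N0 mF [B HB].
apply: measurable_bounded_integrable.
- exact: measurableD mI01 mN.
- have : (leb01 (I01 `\` N) <= leb01 (@I01 R))%E.
    apply: le_measure; rewrite ?inE; [exact: measurableD mI01 mN|exact: mI01|].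
    exact: subDsetl.
  by move/le_lt_trans; apply; rewrite muI01 ltry.
- exact: measurable_funS mI01 (@subDsetl _ _ N) mF.
- exact: bnd_of HB.
Qed.

Lemma int01_D {N : set R} {F : R -> R} : measurable N -> leb01 N = 0%E ->
  measurable_fun I01 F -> bndD (I01 `\` N) F ->
  int01 F = \int[leb01]_(x in I01 `\` N) F x.
Proof.
move=> mN N0 mF bF.
have iD := int_D mN N0 mF bF.
have iI : leb01.-integrable I01 (EFin \o F).
  apply/integrableP; split; first exact/measurable_EFinP.
  rewrite (ge0_negligible_integral _ _ _ _ N0) //.
  - by case/integrableP: iD.
  - exact: mI01.
  - apply: measurableT_comp => //; apply/measurable_EFinP; exact: mF.
by rewrite /int01 /Rintegral (negligible_integral _ _ iI N0) //; exact: mI01.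
Qed.

Lemma bndD_cst (D : set R) (c : R) : bndD D (fun _ => c).
Proof. by exists `|c|. Qed.
Lemma bndD_add (D : set R) F G : bndD D F -> bndD D G -> bndD D (fun x => F x + G x).
Proof.
move=> [B HB] [C HC]; exists (B + C) => x Dx.
by rewrite (le_trans (ler_normD _ _)) // lerD ?HB ?HC.
Qed.
Lemma bndD_opp (D : set R) F : bndD D F -> bndD D (fun x => - F x).
Proof. by move=> [B HB]; exists B => x Dx; rewrite normrN HB. Qed.
Lemma bndD_sub (D : set R) F G : bndD D F -> bndD D G -> bndD D (fun x => F x - G x).
Proof. by move=> hF hG; apply: bndD_add => //; exact: bndD_opp. Qed.
Lemma bndD_mul (D : set R) F G : bndD D F -> bndD D G -> bndD D (fun x => F x * G x).
Proof.
move=> [B HB] [C HC]; exists (B * C) => x Dx.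
by rewrite normrM ler_pM ?HB ?HC.
Qed.
Lemma bndD_exp (D : set R) F : bndD D F -> bndD D (fun x => expR (F x)).
Proof.
move=> [B HB]; exists (expR B) => x Dx.
rewrite ger0_norm ?expR_ge0 // ler_expR (le_trans (ler_norm _)) //; exact: HB.
Qed.
Lemma sqrt_le1n (y : R) : Num.sqrt y <= 1 + `|y|.
Proof.
have [y0|y0] := leP 0 y; last by rewrite ltr0_sqrtr // addr_ge0.
have s2 := sqr_sqrtr y0; have s0 := sqrtr_ge0 y.
rewrite ger0_norm //; set s := Num.sqrt y in s2 s0 *; rewrite -s2. nra.
Qed.
Lemma bndD_sqrt (D : set R) F : bndD D F -> bndD D (fun x => Num.sqrt (F x)).
Proof.
move=> [B HB]; exists (1 + B) => x Dx.
rewrite ger0_norm ?sqrtr_ge0 //.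
apply: (le_trans (sqrt_le1n (F x))); rewrite lerD2l; exact: HB.
Qed.

Section DI.
Variables (N : set R) (mN : measurable N) (N0 : leb01 N = 0%E).
Let D := I01 `\` N.
Let mD : measurable D. Proof. exact: measurableD mI01 mN. Qed.
Definition ID (F : R -> R) := \int[leb01]_(x in D) F x.
Definition good (F : R -> R) := measurable_fun I01 F /\ bndD D F.

Lemma goodI {F} : good F -> leb01.-integrable D (EFin \o F).
Proof. by move=> [mF bF]; exact: int_D mN N0 mF bF. Qed.

Lemma int01_ID F : good F -> int01 F = ID F.
Proof. by move=> [mF bF]; exact: int01_D mN N0 mF bF. Qed.

Lemma ID_le F G : good F -> good G -> (forall x, D x -> F x <= G x) -> ID F <= ID G.
Proof. by move=> gF gG FG; exact: (le_Rintegral _ (goodI gF) (goodI gG) FG). Qed.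

Lemma ID_add F G : good F -> good G -> ID (fun x => F x + G x) = ID F + ID G.
Proof. by move=> gF gG; rewrite /ID (RintegralD _ (goodI gF) (goodI gG)). Qed.

Lemma ID_sub F G : good F -> good G -> ID (fun x => F x - G x) = ID F - ID G.
Proof. by move=> gF gG; rewrite /ID (RintegralB _ (goodI gF) (goodI gG)). Qed.

Lemma ID_scale c F : good F -> ID (fun x => c * F x) = c * ID F.
Proof.
move=> gF; rewrite /ID (@RintegralZl _ _ _ leb01 D F c) //.
exact: goodI gF.
Qed.

Lemma good_cst c : good (fun _ => c).
Proof. split; last exact: bndD_cst. by apply: measurable_cst. Qed.

Lemma ID_cst c : ID (fun _ => c) = c.
Proof.
rewrite -int01_ID; last exact: good_cst.
rewrite /int01 Rintegral_cst; first by rewrite -[X in fine X]/(leb01 (@I01 R)) muI01 mulr1.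
exact: measurable_itv.
Qed.

Lemma good_add F G : good F -> good G -> good (fun x => F x + G x).
Proof. by move=> [mF bF] [mG bG]; split; [exact: measurable_funD|exact: bndD_add]. Qed.
Lemma good_sub F G : good F -> good G -> good (fun x => F x - G x).
Proof. by move=> [mF bF] [mG bG]; split; [exact: measurable_funB|exact: bndD_sub]. Qed.
Lemma good_mul F G : good F -> good G -> good (fun x => F x * G x).
Proof. by move=> [mF bF] [mG bG]; split; [exact: measurable_funM|exact: bndD_mul]. Qed.
Lemma good_exp F : good F -> good (fun x => expR (F x)).
Proof.
move=> [mF bF]; split; last exact: bndD_exp.
by have := measurableT_comp (@measurable_expR R) mF.
Qed.
Lemma good_sqrt F : good F -> good (fun x => Num.sqrt (F x)).
Proof.
move=> [mF bF]; split; last exact: bndD_sqrt.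
by have := measurableT_comp (continuous_measurable_fun (@sqrt_continuous R)) mF.
Qed.
End DI.
End H.

Lemma expR_ub (R : realType) (y : R) : y <= 1/2 -> expR y <= 1 + y + 2 * y ^+ 2.
Proof.
move=> hy.
have h1 : 1 - y <= expR (- y) by rewrite -[1 - y]/(1 + - y) expR_ge1Dx.
have hpos : 0 < 1 - y by lra.
have e : expR y = (expR (- y))^-1 by rewrite expRN invrK.
rewrite e.
apply: (le_trans (y := (1 - y)^-1)).
  by rewrite lef_pV2 ?posrE ?expR_gt0.
rewrite -[(1 - y)^-1]mul1r ler_pdivrMr //.
have hy2 : 0 <= y^+2 * (1 - 2 * y) by rewrite mulr_ge0 ?sqr_ge0 //; lra.
nra.
Qed.

Lemma sq_ineq (R : realType) (x y G K a : R) : 0 <= x -> 0 <= y -> `|G| <= K -> 0 < a ->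
  K * a <= 3/4 ->
  x^+2 * G^+2 <= 5/4 * (y^+2 * G^+2) + 9/8 * ((x - y)^+2 / a^+2) + 1/4 * (x^+2 * G^+2).
Proof.
move=> x0 y0 GK a0 Ka.
set u := (x - y) / a.
have hu : (x - y)^+2 / a^+2 = u^+2 by rewrite /u expr_div_n.
rewrite hu.
have K0 : 0 <= K by exact: le_trans (normr_ge0 _) GK.
have G2 : G^+2 <= `|G| * K by rewrite -(real_normK (num_real G)) expr2 ler_wpM2l.
have xy : x - y = u * a by rewrite /u divfK ?gt_eqF.
have step1 : x^+2 * G^+2 - y^+2 * G^+2 <= `|u| * a * K * ((x + y) * `|G|).
  have -> : x^+2 * G^+2 - y^+2 * G^+2 = (x - y) * ((x + y) * G^+2) by ring.
  have e1 : `|x - y| = `|u| * a by rewrite xy normrM (gtr0_norm a0).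
  have h1 : (x - y) * ((x + y) * G^+2) <= `|x - y| * ((x + y) * G^+2).
    by apply: ler_wpM2r; [rewrite mulr_ge0 ?addr_ge0 ?sqr_ge0|exact: ler_norm].
  apply: (le_trans h1); rewrite e1 -!mulrA; apply: ler_wpM2l => //.
  apply: ler_wpM2l; first exact: ltW.
  rewrite [K * _]mulrC -mulrA; apply: ler_wpM2l; first by rewrite addr_ge0.
  by [].
set v := (x + y) * `|G|.
have v0 : 0 <= v by rewrite mulr_ge0 ?addr_ge0.
have hv : v^+2 <= 2 * (x^+2 * G^+2) + 2 * (y^+2 * G^+2).
  rewrite /v exprMn (real_normK (num_real G)); have := mulr_ge0 (sqr_ge0 G) (sqr_ge0 (x - y)); nra.
have hKa : 0 <= a * K by exact: mulr_ge0 (ltW a0) K0.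
have au : 0 <= `|u| by [].
set w := a * K in hKa.
have hw : w <= 3/4 by rewrite /w mulrC.
have u2 : `|u|^+2 = u^+2 by rewrite (real_normK (num_real u)).
have am : `|u| * w * v <= 2 * w^+2 * u^+2 + v^+2 / 8.
  rewrite -u2; have := sqr_ge0 (w * `|u| - v / 4); nra.
have w2 : w^+2 <= 9/16 by nra.
have st : `|u| * a * K * v = `|u| * w * v by rewrite /w !mulrA.
rewrite st in step1.
have : 2 * w^+2 * u^+2 <= 9/8 * u^+2 by have := sqr_ge0 u; nra.
nra.
Qed.

Lemma ln3 (R : realType) : 2/3 <= ln (3 : R).
Proof.
have h := @le_ln1Dx R (-(2/3)) ltac:(lra).
have e : 1 + -(2/3) = (3 : R)^-1 by field.
rewrite e lnV ?posrE // in h; lra.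
Qed.

Lemma sqrt_le_sq (R : realType) (v c : R) : 0 <= v -> Num.sqrt v <= c -> v <= c ^+ 2.
Proof. move=> v0 h; have s := sqrtr_ge0 v; have s2 := sqr_sqrtr v0; nra. Qed.

Lemma core (R : realType) (m : R) (f0 f gam : R -> R) (a : R) (n : nat) (t : R) :
  is_density01 f0 ->
  (exists rho0 D0 : R, 0 < rho0 /\ forall x, I01 x -> rho0 <= f0 x <= D0) ->
  is_density01 f -> bdd_away0 f -> hell01 f f0 <= a ->
  1 <= n%:R * a ^+ 2 ->
  measurable_fun I01 gam ->
  Lnorm_f0 f0 (centered f0 gam) <= m ->
  (linf01 (centered f0 gam) <= ((4 * a * ln (n.+1)%:R)^-1)%:E)%E ->
  (1 <= n)%N -> `|t| <= ln n%:R ->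
  0 < int01 (fun y => f y * expR (- (t * centered f0 gam y) / Num.sqrt n%:R)) /\
  t * Num.sqrt n%:R * ip01 (fun x => f x - f0 x) gam +
    n%:R * ln (int01 (fun y => f y * expR (- (t * centered f0 gam y) / Num.sqrt n%:R)))
  <= (4 * m ^+ 2 + 4) * t ^+ 2.
Proof.
move=> [mf0 [f0ge0 If0]] [rho0 [D0 [rho0_gt0 f0b]]] [mf [fge0 If]] [lo [hi [lo0 fb]]] ha na mgam hL hinf n1 ht.
set g := centered f0 gam.
set mu := mean0 f0 gam.
have gE x : g x = gam x - mu by [].
have [t00|t0] := eqVneq t 0.
  rewrite t00.
  have -> : (fun y => f y * expR (- (0 * g y) / Num.sqrt n%:R)) = f.
    by apply: funext => y; rewrite mul0r oppr0 mul0r expR0 mulr1.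
  rewrite If ln1 mulr0 !mul0r add0r expr0n /= mulr0; split => //; exact: ltr01.
have n2 : (2 <= n)%N.
  have [n_1|n_1] := eqVneq n 1%N.
    by move: ht; rewrite n_1 ln1 normr_le0 (negPf t0).
  by rewrite ltn_neqAle eq_sym n_1 n1.
set sq := Num.sqrt n%:R.
have nR : (2%:R <= n%:R :> R) by rewrite ler_nat.
have n0 : (0 < n%:R :> R) by rewrite ltr0n (leq_trans _ n2).
have sq0 : 0 < sq by rewrite sqrtr_gt0.
have sq2 : sq^+2 = n%:R by rewrite sqr_sqrtr ?ler0n.
set L := ln (n.+1)%:R in hinf.
have L23 : 2/3 <= L.
  apply: (le_trans (ln3 R)); rewrite /L ler_ln ?posrE ?ltr0n //.
  by rewrite ler_nat.
have hge : 0 <= hell01 f f0 by rewrite /hell01 sqrtr_ge0.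
have a0 : 0 < a.
  have a0' : 0 <= a := le_trans hge ha.
  rewrite lt_neqAle a0' andbT; apply/eqP => a00.
  by move: na; rewrite -a00 expr0n /= mulr0 ler10.
have asq : 1 <= a * sq.
  have h : (a * sq)^+2 >= 1 by rewrite exprMn sq2 mulrC.
  have : 0 <= a * sq by rewrite mulr_ge0 ?ltW.
  nra.
have lnn : ln n%:R <= L by rewrite /L ler_ln ?posrE ?ltr0n ?ler_nat //; exact: (leq_trans _ n2).
have tL : `|t| <= L := le_trans ht lnn.
have L0 : 0 < L by lra.
pose K := (2 * a * L)^-1.
have K0 : 0 < K by rewrite invr_gt0 !mulr_gt0.
have KaL : K * (2 * a * L) = 1 by rewrite mulVf // gt_eqF // !mulr_gt0.
have Ka : K * a <= 3/4.
  have : K * a * (2 * L) = 1 by rewrite -[RHS]KaL; ring.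
  nra.
have tK : `|t| * K / sq <= 1/2.
  rewrite ler_pdivrMr //.
  have h1 : `|t| * K <= L * K by rewrite ler_pM2r.
  have h2 : L * K * (2 * a) = 1 by rewrite -[RHS]KaL; ring.
  nra.
have MK : (((4 * a * L)^-1)%:E < K%:E)%E.
  rewrite lte_fin /K ltf_pV2 ?posrE ?mulr_gt0 //.
  by rewrite -!mulrA ltr_pM2r ?mulr_gt0 // ltr_nat.
have := ereal_inf_lt (le_lt_trans hinf MK) => -[y Sy yK].
case: Sy => N [mN N0 sub].
have gK : forall x, (I01 `\` N) x -> `|g x| <= K.
  move=> x [Ix Nx].
  have : (`|g x|%:E <= y)%E.
    apply: contrapT => H; apply: Nx; apply: sub => /= H'; apply: H; exact: H' Ix.
  by move=> /le_lt_trans /(_ yK); rewrite lte_fin => /ltW.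
have IDle := @ID_le R N mN N0.
have IDadd := @ID_add R N mN N0.
have IDsub := @ID_sub R N mN N0.
have IDsc := @ID_scale R N mN N0.
have IDcst := @ID_cst R N mN N0.
have toID := @int01_ID R N mN N0.
have gadd := @good_add R N.
have gsub := @good_sub R N.
have gmul := @good_mul R N.
have gcst := @good_cst R N.
have gf : good N f.
  split => //; exists hi => x [Ix _]; rewrite ger0_norm ?fge0 //.
  by case/andP: (fb x Ix).
have gf0 : good N f0.
  split => //; exists D0 => x [Ix _]; rewrite ger0_norm ?f0ge0 //.
  by case/andP: (f0b x Ix).
have gg : good N g.
  split; last by exists K.
  by apply: measurable_funB => //; apply: measurable_cst.
have ggam : good N gam.
  split => //; exists (K + `|mu|) => x Dx.
  have -> : gam x = g x + mu by rewrite gE; ring.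
  by rewrite (le_trans (ler_normD _ _)) // lerD2r gK.
have Jf : ID N f = 1 by rewrite -toID.
have Jf0 : ID N f0 = 1 by rewrite -toID.
have ID0 : forall F, good N F -> (forall x, (I01 `\` N) x -> 0 <= F x) -> 0 <= ID N F.
  by move=> F gF F0; rewrite -(IDcst 0); apply: (IDle).
have Jmu : ID N (fun x => gam x * f0 x) = mu by rewrite -toID //; exact: gmul.
have Jg0 : ID N (fun x => g x * f0 x) = 0.
  have -> : (fun x => g x * f0 x) = (fun x => gam x * f0 x - mu * f0 x).
    by apply: funext => x; rewrite gE; ring.
  rewrite IDsub; last 2 first.
  - exact: gmul ggam gf0.
  - exact: gmul (gcst mu) gf0.
  by rewrite IDsc // Jmu Jf0 mulr1 subrr.
have gsq : forall F, good N F -> good N (fun x => F x ^+ 2).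
  move=> FF hF; have -> : (fun x => FF x ^+ 2) = (fun x => FF x * FF x).
    by apply: funext => x; rewrite expr2.
  by apply: (gmul).
have gsqrt := @good_sqrt R N.
have mg0 : mean0 f0 g = 0 by rewrite /mean0 toID //; exact: gmul gg gf0.
have S0m : ID N (fun x => g x ^+ 2 * f0 x) <= m ^+ 2.
  move: hL; rewrite /Lnorm_f0 mg0.
  have -> : (fun x => (g x - 0) ^+ 2 * f0 x) = (fun x => g x ^+ 2 * f0 x).
    by apply: funext => x; rewrite subr0.
  rewrite toID; last exact: gmul (gsq _ gg) gf0.
  apply: sqrt_le_sq; apply: (ID0); first exact: gmul (gsq _ gg) gf0.
  by move=> x [Ix _]; rewrite mulr_ge0 ?sqr_ge0 ?f0ge0.
have gH : good N (fun x => (Num.sqrt (f x) - Num.sqrt (f0 x)) ^+ 2).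
  by apply: (gsq); apply: (gsub); apply: (gsqrt).
have Ha : ID N (fun x => (Num.sqrt (f x) - Num.sqrt (f0 x)) ^+ 2) <= a ^+ 2.
  move: ha; rewrite /hell01 toID //.
  by apply: sqrt_le_sq; apply: (ID0) => // x _; rewrite sqr_ge0.
have gexp := @good_exp R N.
have gS1 : good N (fun x => f x * g x) by apply: (gmul).
have gS : good N (fun x => f x * g x ^+ 2) by apply: (gmul) => //; apply: (gsq).
have gS0 : good N (fun x => g x ^+ 2 * f0 x) by apply: (gmul) => //; apply: (gsq).
have Jip : ip01 (fun x => f x - f0 x) gam = ID N (fun x => f x * g x).
  rewrite /ip01 toID; last by apply: (gmul) => //; apply: (gsub).
  have -> : (fun x => (f x - f0 x) * gam x) =
    (fun x => (f x * g x - g x * f0 x) + (mu * f x - mu * f0 x)).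
    by apply: funext => x; rewrite gE; ring.
  rewrite IDadd; first last.
  - by apply: (gsub); apply: (gmul).
  - by apply: (gsub); apply: (gmul).
  rewrite IDsub //; last by apply: (gmul).
  rewrite IDsub; first last.
  - by apply: (gmul).
  - by apply: (gmul).
  by rewrite !IDsc // Jf Jf0 Jg0 subrr subr0 addr0.
pose yy x := - (t * g x) / sq.
have yb : forall x, (I01 `\` N) x -> `|yy x| <= 1/2.
  move=> x Dx; rewrite /yy normrM normrN normrM normfV (gtr0_norm sq0).
  apply: le_trans tK; rewrite ler_pM2r ?invr_gt0 // ler_wpM2l //; exact: gK.
have yyE : yy = (fun x => (- t / sq) * g x).
  by apply: funext => x; rewrite /yy -mulNr mulrAC.
have gyy : good N yy by rewrite yyE; apply: (gmul) => //; exact: gcst.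
have gZ : good N (fun x => f x * expR (yy x)).
  by apply: (gmul) => //; apply: (gexp).
have JZ : int01 (fun x => f x * expR (- (t * g x) / sq)) = ID N (fun x => f x * expR (yy x)).
  by rewrite toID.
rewrite JZ Jip.
set Z := ID N (fun x => f x * expR (yy x)).
set S1 := ID N (fun x => f x * g x).
set S := ID N (fun x => f x * g x ^+ 2).
set S0 := ID N (fun x => g x ^+ 2 * f0 x) in S0m.
set H := ID N (fun x => (Num.sqrt (f x) - Num.sqrt (f0 x)) ^+ 2) in Ha.
have fD : forall x, (I01 `\` N) x -> 0 <= f x by move=> x [Ix _]; exact: fge0.
have f0D : forall x, (I01 `\` N) x -> 0 <= f0 x by move=> x [Ix _]; exact: f0ge0.
have Zlo : 1/2 <= Z.
  have <- : ID N (fun x => 1/2 * f x) = 1/2 by rewrite IDsc // Jf mulr1.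
  apply: (IDle) => //; first by apply: (gmul) => //; exact: gcst.
  move=> x Dx; rewrite mulrC; apply: ler_wpM2l; first exact: fD.
  have := yb x Dx; have := expR_ge1Dx (yy x); rewrite ler_norml; lra.
have Zup : Z <= 1 + (- t / sq) * S1 + 2 * (- t / sq) ^+ 2 * S.
  have <- : ID N (fun x => f x + (- t / sq) * (f x * g x) + (2 * (- t / sq) ^+ 2) * (f x * g x ^+ 2))
       = 1 + (- t / sq) * S1 + 2 * (- t / sq) ^+ 2 * S.
    rewrite IDadd; first last.
    - by apply: (gmul) => //; exact: gcst.
    - by apply: (gadd) => //; apply: (gmul) => //; exact: gcst.
    rewrite IDadd //; last by apply: (gmul) => //; exact: gcst.
    by rewrite !IDsc // Jf.
  apply: (IDle) => //.
    apply: (gadd); last by apply: (gmul) => //; exact: gcst.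
    by apply: (gadd) => //; apply: (gmul) => //; exact: gcst.
  move=> x Dx.
  have h := expR_ub _ (yy x) (le_trans (ler_norm _) (yb x Dx)).
  have -> : f x + (- t / sq) * (f x * g x) + (2 * (- t / sq) ^+ 2) * (f x * g x ^+ 2)
      = f x * (1 + yy x + 2 * yy x ^+ 2) by rewrite yyE; ring.
  rewrite ler_pM2l //; case: Dx => Ix _; case/andP: (fb x Ix) => h1 _; exact: lt_le_trans lo0 h1.
have hS : S <= 5/4 * S0 + 9/8 * ((a ^+ 2)^-1 * H) + 1/4 * S.
  have <- : ID N (fun x => 5/4 * (g x ^+ 2 * f0 x)
        + 9/8 * ((a ^+ 2)^-1 * (Num.sqrt (f x) - Num.sqrt (f0 x)) ^+ 2)
        + 1/4 * (f x * g x ^+ 2)) = 5/4 * S0 + 9/8 * ((a ^+ 2)^-1 * H) + 1/4 * S.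
    rewrite IDadd; first last.
    - by apply: (gmul) => //; exact: gcst.
    - apply: (gadd); apply: (gmul) => //; try exact: gcst.
      by apply: (gmul) => //; exact: gcst.
    rewrite IDadd; first last.
    - by apply: (gmul); [exact: gcst|apply: (gmul) => //; exact: gcst].
    - by apply: (gmul) => //; exact: gcst.
    by rewrite !IDsc //; apply: (gmul) => //; exact: gcst.
  apply: (IDle) => //.
    apply: (gadd); last by apply: (gmul) => //; exact: gcst.
    apply: (gadd); first by apply: (gmul) => //; exact: gcst.
    by apply: (gmul); [exact: gcst|apply: (gmul) => //; exact: gcst].
  move=> x Dx /=.
  have := @sq_ineq R _ _ _ _ _ (sqrtr_ge0 (f x)) (sqrtr_ge0 (f0 x)) (gK x Dx) a0 Ka.
  rewrite (sqr_sqrtr (fD x Dx)) (sqr_sqrtr (f0D x Dx)).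
  rewrite -[(Num.sqrt (f x) - Num.sqrt (f0 x)) ^+ 2 / a ^+ 2]mulrC.
  lra.
have Ha1 : (a ^+ 2)^-1 * H <= 1.
  by rewrite mulrC ler_pdivrMr ?mul1r // exprn_gt0.
have m2 : 0 <= m ^+ 2 by exact: sqr_ge0.
have Sb : S <= 2 * m ^+ 2 + 2 by lra.
split; first lra.
have lnZ : ln Z <= Z - 1.
  have := @le_ln1Dx R (Z - 1) ltac:(lra).
  by rewrite (_ : 1 + (Z - 1) = Z) //; ring.
have sqn0 : sq != 0 by rewrite gt_eqF.
have e1 : n%:R * (- t / sq) = - (t * sq) by rewrite -sq2; field.
have e2 : n%:R * (- t / sq) ^+ 2 = t ^+ 2 by rewrite -sq2; field.
have nn : 0 <= n%:R :> R by exact: ler0n.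
have step : n%:R * ln Z <= n%:R * ((- t / sq) * S1 + 2 * (- t / sq) ^+ 2 * S).
  by apply: ler_wpM2l => //; lra.
have e3 : n%:R * ((- t / sq) * S1 + 2 * (- t / sq) ^+ 2 * S)
    = (n%:R * (- t / sq)) * S1 + 2 * (n%:R * (- t / sq) ^+ 2) * S by ring.
rewrite e3 e1 e2 in step.
have := ler_wpM2l (sqr_ge0 t) Sb.
lra.
Qed.

Lemma tilt_log (R : realType) (gt f : R -> R) (n : nat) (t : R) (X : nat -> R) :
  (forall i, (i < n)%N -> 0 < f (X i)) ->
  0 < int01 (fun y => f y * expR (- (t * gt y) / Num.sqrt n%:R)) ->
  loglik n X (tilt gt n t f) =
  loglik n X f + \sum_(i < n) (- (t * gt (X i)) / Num.sqrt n%:R)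
   - n%:R * ln (int01 (fun y => f y * expR (- (t * gt y) / Num.sqrt n%:R))).
Proof.
move=> fpos Zpos; set Z := int01 _.
rewrite /loglik /tilt -/Z.
have -> : n%:R * ln Z = \sum_(i < n) ln Z by rewrite sumr_const card_ord mulr_natl.
rewrite -big_split /= -sumrB; apply: eq_bigr => i _.
rewrite lnM ?posrE ?mulr_gt0 ?expR_gt0 ?invr_gt0 ?fpos //.
by rewrite lnM ?posrE ?expR_gt0 ?fpos // lnV ?posrE // expRK.
Qed.

Theorem lemma3 (R : realType) (m Dinf : R) : 0 < m ->
  exists C : R, 0 < C /\
  forall (d : measure_display) (T : measurableType d)
    (f0 : R -> R) (a : nat -> R) (Pi : nat -> probability T R)
    (dens : T -> R -> R) (gam : nat -> R -> R),
    is_density01 f0 ->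
    (exists rho0 D0 : R, 0 < rho0 /\ forall x, I01 x -> rho0 <= f0 x <= D0) ->
    linf01 f0 = Dinf%:E ->
    (forall n : nat, (1 <= n)%N -> 1 <= n%:R * a n ^+ 2) ->
    measurable_fun setT (fun p : T * R => dens p.1 p.2) ->
    (forall n : nat, (1 <= n)%N ->
       {ae Pi n, forall th, is_density01 (dens th) /\ bdd_away0 (dens th) /\
                            hell01 (dens th) f0 <= a n}) ->
    (forall n : nat, measurable_fun I01 (gam n) /\ (linf01 (gam n) < +oo)%E) ->
    (forall n : nat, (1 <= n)%N -> Lnorm_f0 f0 (centered f0 (gam n)) <= m) ->
    (forall n : nat, (1 <= n)%N ->
       (linf01 (centered f0 (gam n)) <= ((4 * a n * ln (n.+1)%:R)^-1)%:E)%E) ->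
    forall (n : nat) (t : R) (X : nat -> R),
      (1 <= n)%N -> `|t| <= ln n%:R ->
      (forall i : nat, (i < n)%N -> I01 (X i)) ->
      (post_exp (Pi n) n X dens
         (fun th => expR (t * Num.sqrt n%:R *
                          ip01 (fun x => dens th x - f0 x) (gam n)))%R
       <= (expR (C * t ^+ 2 + t * Wn f0 n X (gam n)))%R%:E *
          ((\int[Pi n]_th
              (expR (loglik n X (tilt (centered f0 (gam n)) n t (dens th))
                     - loglik n X f0))%R%:E) /
           (\int[Pi n]_th (expR (loglik n X (dens th) - loglik n X f0))%R%:E)))%E.
Proof.
move=> hm; exists (4 * m ^+ 2 + 4); split.
  by have := sqr_ge0 m; lra.
move=> d T f0 a Pi dens gam Hf0 Hrho Hinf Hna Hmeas Hae Hgam HL Hlinf n t X Hn Ht HX.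
set C := 4 * m ^+ 2 + 4.
set K := expR (C * t ^+ 2 + t * Wn f0 n X (gam n)).
set c := expR (- loglik n X f0).
have K0 : 0 < K by exact: expR_gt0.
have c0 : 0 < c by exact: expR_gt0.
rewrite /post_exp.
apply: (@ratio_le R _ _ _ _ K c K0 c0).
- by apply: integral_ge0 => th _; rewrite lee_fin mulr_ge0 ?expR_ge0.
- by apply: integral_ge0 => th _; rewrite lee_fin expR_ge0.
- by apply: integral_ge0 => th _; rewrite lee_fin expR_ge0.
- by apply: integral_ge0 => th _; rewrite lee_fin expR_ge0.
- have Kc : 0 < K / c by rewrite divr_gt0.
  apply: (@key_le _ _ _ _ _ _ (K / c) Kc).
  + by move=> th; rewrite lee_fin mulr_ge0 ?expR_ge0.
  + by move=> th; rewrite lee_fin expR_ge0.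
  apply: filterS (Hae n Hn) => th [hd [hb hh]].
  have [gm _] := Hgam n.
  have [Zpos main] := @core R m f0 (dens th) (gam n) (a n) n t Hf0 Hrho hd hb hh (Hna n Hn) gm (HL n Hn) (Hlinf n Hn) Hn Ht.
  have fpos : forall i, (i < n)%N -> 0 < dens th (X i).
    move=> i ilt; case: hb => lo [hi [lo0 hb]].
    by case/andP: (hb _ (HX i ilt)) => h1 _; exact: lt_le_trans lo0 h1.
  rewrite -EFinM lee_fin (@tilt_log R _ _ n t X fpos Zpos).
  have sW : \sum_(i < n) (- (t * centered f0 (gam n) (X i)) / Num.sqrt n%:R)
      = - (t * Wn f0 n X (gam n)).
    rewrite /Wn mulrA -mulNr mulr_sumr; apply: eq_bigr => i _; rewrite /centered; ring.
  rewrite sW /K /c expRN invrK -!expRD ler_expR.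
  rewrite /C in main *; lra.
- apply: (@key_le _ _ _ _ _ _ c c0).
  + by move=> th; rewrite lee_fin expR_ge0.
  + by move=> th; rewrite lee_fin expR_ge0.
  by apply: aeW => th; rewrite -EFinM lee_fin /c -expRD addrC.
Qed.
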